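(* Let $\mathbf A\in\mathbb C^{n\times n}$ with $\operatorname{Ind}\mathbf A=1$ and $\operatorname{rank}\mathbf A^{2}=\operatorname{rank}\mathbf A=r\le n$. Then the group inverse $\mathbf A^{g}=(a^{g}_{ij})$ satisfies, for all $i,j=1,\dots,n$, \[a^{g}_{ij}=\frac{\sum_{\alpha\in I_{r,n}\{j\}}\left|\left(\mathbf A^{2}_{j.}(\mathbf a_{i.})\right)^{\alpha}_{\alpha}\right|}{\sum_{\alpha\in I_{r,n}}\left|(\mathbf A^{2})^{\alpha}_{\alpha}\right|} \quad\text{and}\quad a^{g}_{ij}=\frac{\sum_{\beta\in J_{r,n}\{i\}}\left|\left(\mathbf A^{2}_{.i}(\mathbf a_{.j})\right)^{\beta}_{\beta}\right|}{\sum_{\beta\in J_{r,n}}\left|(\mathbf A^{2})^{\beta}_{\beta}\right|},\] where $\mathbf a_{i.}$ and $\mathbf a_{.j}$ are the $i$-th row and $j$-th column of $\mathbf A$.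
   Context: $\operatorname{Ind}\mathbf A$ is the smallest nonnegative $k$ with $\operatorname{rank}\mathbf A^{k+1}=\operatorname{rank}\mathbf A^{k}$. The group inverse $\mathbf A^{g}$ is the unique $\mathbf X$ with $\mathbf A\mathbf X\mathbf A=\mathbf A$, $\mathbf X\mathbf A\mathbf X=\mathbf X$, $\mathbf A\mathbf X=\mathbf X\mathbf A$. $\mathbf M_{.i}(\mathbf c)$ (resp. $\mathbf M_{j.}(\mathbf c)$) is obtained by replacing the $i$-th column (resp. $j$-th row) of $\mathbf M$ by $\mathbf c$. For $1\le k\le n$, $L_{k,n}$ is the set of strictly increasing sequences of $k$ elements of $\{1,\dots,n\}$; $I_{k,n}=J_{k,n}=L_{k,n}$, $I_{k,n}\{i\}=J_{k,n}\{i\}=\{\alpha\in L_{k,n}:i\in\alpha\}$; $\mathbf M^{\alpha}_{\alpha}$ is the principal submatrix indexed by $\alpha$; $|\cdot|$ is the determinant. *)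

(* Defs.v *)
From HB Require Import structures.
From mathcomp Require Import all_boot all_order all_algebra.
From mathcomp Require Import complex.
From mathcomp Require Import reals.
Set Implicit Arguments. Unset Strict Implicit. Unset Printing Implicit Defensive.
Import Order.TTheory GRing.Theory Num.Theory.
Local Open Scope ring_scope.

Section Defs.
Variable F : fieldType.

Definition is_mx_index n (A : 'M[F]_n) (k : nat) : Prop :=
  \rank (A ^+ k.+1) = \rank (A ^+ k) /\
  (forall m : nat, (m < k)%N -> \rank (A ^+ m.+1) <> \rank (A ^+ m)).

Definition is_group_inverse n (A X : 'M[F]_n) : Prop :=
  [/\ A *m X *m A = A, X *m A *m X = X & A *m X = X *m A].

Definition row_repl n (M : 'M[F]_n) (j : 'I_n) (c : 'rV[F]_n) : 'M[F]_n :=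
  \matrix_(k, l) if k == j then c 0 l else M k l.

Definition col_repl n (M : 'M[F]_n) (i : 'I_n) (c : 'cV[F]_n) : 'M[F]_n :=
  \matrix_(k, l) if l == i then c k 0 else M k l.

Definition principal_minor n (M : 'M[F]_n) (alpha : {set 'I_n}) : F :=
  \det (\matrix_(k < #|alpha|, l < #|alpha|)
          M (enum_val k) (enum_val l)).
End Defs.

(* Main.v *)
Require Import Defs.
From HB Require Import structures.
From mathcomp Require Import all_boot all_order all_algebra all_fingroup.
From mathcomp Require Import zify ring.
From mathcomp Require Import complex.
From mathcomp Require Import reals.
Set Implicit Arguments. Unset Strict Implicit. Unset Printing Implicit Defensive.
Import Order.TTheory GRing.Theory Num.Theory.
Local Open Scope ring_scope.


Definition pmr (R : pzRingType) n (M : 'M[R]_n) (S : {set 'I_n}) : R :=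
  \det (\matrix_(k < #|S|, l < #|S|) M (enum_val k) (enum_val l)).

Definition pad (R : pzRingType) n (M : 'M[R]_n) (S : {set 'I_n}) : 'M[R]_n :=
  \matrix_(k, l) if k \in S then M k l else (k == l)%:R.

Lemma det_conj_perm (R : comPzRingType) n (s : 'S_n) (B : 'M[R]_n) :
  \det (\matrix_(i, j) B (s i) (s j)) = \det B.
Proof.
have -> : \matrix_(i, j) B (s i) (s j) = perm_mx s *m B *m perm_mx s^-1.
  by rewrite -row_permE -col_permE; apply/matrixP => i j; rewrite !mxE.
rewrite !det_mulmx !det_perm odd_permV mulrC mulrA -signr_addb addbb mul1r.
by [].
Qed.

Lemma det_cast (R : comPzRingType) m n (e : m = n) (A : 'M[R]_m) :
  \det (castmx (e, e) A) = \det A.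
Proof. by case: n / e; rewrite castmx_id. Qed.

Lemma pad_det (R : comPzRingType) n (M : 'M[R]_n) S : \det (pad M S) = pmr M S.
Proof.
set m := #|S|; set m' := #|~: S|.
have e : (m + m' = n)%N by rewrite /m /m' cardsC card_ord.
pose f (x : 'I_(m + m')) : 'I_n :=
  match split x with inl a => enum_val a | inr b => enum_val b end.
have fl k : f (lshift m' k) = enum_val k.
  by rewrite /f; have := unsplitK (inl k : 'I_m + 'I_m') => /= ->.
have fr k : f (rshift m k) = enum_val k.
  by rewrite /f; have := unsplitK (inr k : 'I_m + 'I_m') => /= ->.
have f_inj : injective f.
  move=> x y; have H : split x = split y -> x = y.
    by move/(congr1 unsplit); rewrite !splitK.
  rewrite /f => hxy; apply: H; move: hxy.
  case: (split x) => a; case: (split y) => b hab.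
  - by rewrite (enum_val_inj hab).
  - have := enum_valP a; have := enum_valP b.
    by rewrite -hab inE => /negP.
  - have := enum_valP a; have := enum_valP b.
    by rewrite -hab inE => + /negP.
  - by rewrite (enum_val_inj hab).
pose g (i : 'I_n) := f (cast_ord (esym e) i).
have g_inj : injective g by move=> i j /f_inj /cast_ord_inj.
pose s := perm g_inj.
rewrite -(det_conj_perm s).
have -> : \matrix_(i, j) pad M S (s i) (s j) =
          castmx (e, e) (\matrix_(x, y) pad M S (f x) (f y)).
  by apply/matrixP => i j; rewrite castmxE !mxE !permE.
rewrite det_cast -[\matrix_(x, y) _]submxK.
have -> : dlsubmx (\matrix_(x, y) pad M S (f x) (f y)) = 0.
  apply/matrixP => k l; rewrite !mxE fl fr.
  have := enum_valP k; rewrite inE => /negPf ->.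
  case: eqP => // hkl; have := enum_valP k; have := enum_valP l.
  by rewrite -hkl inE => ->.
rewrite det_ublock.
have -> : drsubmx (\matrix_(x, y) pad M S (f x) (f y)) = 1%:M.
  apply/matrixP => k l; rewrite !mxE !fr.
  have := enum_valP k; rewrite inE => /negPf ->.
  by rewrite (inj_eq enum_val_inj).
rewrite det1 mulr1 /pmr; congr (\det _); apply/matrixP => k l.
by rewrite !mxE !fl enum_valP.
Qed.



Lemma L1 (R : comPzRingType) n (d : 'I_n -> R) (M : 'M[R]_n) :
  \det (diag_mx (\row_k d k) + M) =
  \sum_(S : {set 'I_n}) (\prod_(k in ~: S) d k) * pmr M S.
Proof.
under [RHS]eq_bigr do rewrite -pad_det /determinant big_distrr.
rewrite exchange_big /=; apply: eq_bigr => s _.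
under eq_bigr do rewrite !mxE addrC.
rewrite bigA_distr big_distrr /=; apply: eq_bigr => S _.
rewrite mulrCA; congr (_ * _).
rewrite (bigID (mem S)) [X in _ = _ * X](bigID (mem S)) /=.
rewrite [X in _ = X * _](eq_bigl (fun i => ~~ (i \in S))); last first.
  by move=> i; rewrite inE.
have -> : \prod_(i | i \in S) (pad M S) i (s i) = \prod_(i | i \in S) M i (s i).
  by apply: eq_bigr => i iS; rewrite mxE iS.
have -> : \prod_(i | ~~ (i \in S)) (pad M S) i (s i) =
          \prod_(i | ~~ (i \in S)) ((i == s i)%:R : R).
  by apply: eq_bigr => i /negPf iS; rewrite mxE iS.
have -> : \prod_(i | i \in S) (if i \in S then M i (s i) else d i *+ (i == s i))
          = \prod_(i | i \in S) M i (s i).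
  by apply: eq_bigr => i ->.
have -> : \prod_(i | ~~ (i \in S)) (if i \in S then M i (s i) else d i *+ (i == s i))
          = \prod_(i | ~~ (i \in S)) (d i * (i == s i)%:R).
  by apply: eq_bigr => i /negPf ->; rewrite mulr_natr.
by rewrite big_split /= mulrCA.
Qed.



Lemma pmr_rank (F : fieldType) n (C : 'M[F]_n) (S : {set 'I_n}) :
  (\rank C < #|S|)%N -> pmr C S = 0.
Proof.
move=> hlt; apply/eqP; apply: contraLR hlt; rewrite -leqNgt => hdet.
set N := \matrix_(k < #|S|, l < #|S|) C (enum_val k) (enum_val l).
have hu : N \in unitmx by rewrite unitmxE unitfE.
rewrite -(mxrank_unit hu).
have -> : N = rowsub enum_val (colsub enum_val C).
  by apply/matrixP => k l; rewrite !mxE.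
apply: leq_trans (mxrankS (rowsub_sub _ _)) _.
rewrite -mxrank_tr.
have -> : (colsub (enum_val : 'I_#|S| -> 'I_n) C)^T = rowsub enum_val C^T.
  by apply/matrixP => k l; rewrite !mxE.
by apply: leq_trans (mxrankS (rowsub_sub _ _)) _; rewrite mxrank_tr.
Qed.

Lemma pmr_map (F : fieldType) n (C : 'M[F]_n) (c : {poly F}) (S : {set 'I_n}) :
  pmr (c *: map_mx polyC C) S = c ^+ #|S| * (pmr C S)%:P.
Proof.
rewrite /pmr -det_map_mx -detZ; congr (\det _).
by apply/matrixP => k l; rewrite !mxE.
Qed.

Lemma XdiagE (R : comPzRingType) n (x : R) :
  (x%:M : 'M[R]_n) = diag_mx (\row_(k < n) x).
Proof. by apply/matrixP => i j; rewrite !mxE. Qed.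

Lemma Dlem (F : fieldType) n (C : 'M[F]_n) (c : {poly F}) :
  exists q, \det ('X%:M + c *: map_mx polyC C) = 'X^(n - \rank C) * q.
Proof.
rewrite XdiagE L1.
set s := \rank C.
exists (\sum_(S : {set 'I_n}) if (#|S| <= s)%N then
          'X^(#|~: S| - (n - s)) * (c ^+ #|S| * (pmr C S)%:P) else 0).
rewrite big_distrr /=; apply: eq_bigr => S _.
rewrite prodr_const pmr_map.
case: leqP => hS; last by rewrite pmr_rank // polyC0 !mulr0.
rewrite [RHS]mulrA -exprD subnKC //.
have hc := cardsC S; rewrite card_ord in hc.
move: hc hS; rewrite /s; move: (#|S|) (#|~: S|) (\rank C) => a b t; lia.
Qed.



Ltac mexp := repeat first [rewrite mulmxDl | rewrite mulmxDr | rewrite mulmxBl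
  | rewrite mulmxBr | rewrite mul1mx | rewrite mulmx1 | rewrite mulNmx | rewrite mulmxN
  | rewrite -scalemxAl | rewrite -scalemxAr | rewrite scalerA ].

Ltac mring := apply/matrixP => ? ?; rewrite !mxE; ring.

Lemma scal_cancel (F : fieldType) n (p : {poly F}) (Y : 'M[{poly F}]_n) :
  p != 0 -> p *: Y = 0 -> Y = 0.
Proof.
move=> pn0 hY; apply/matrixP => i j.
have := congr1 (fun M : 'M_n => M i j) hY; rewrite !mxE => /eqP.
by rewrite mulf_eq0 (negbTE pn0) /= => /eqP.
Qed.

Lemma main (F : fieldType) n r (A Ag : 'M[F]_n) :
  \rank A = r -> A *m Ag *m A = A -> Ag *m A *m Ag = Ag -> A *m Ag = Ag *m A ->
  exists c : F, [/\ c != 0,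
    (\det ('X%:M + map_mx polyC (A *m A)))`_(n - r) = c &
    forall i j,
      ((\adj ('X%:M + map_mx polyC (A *m A)) *m map_mx polyC A) i j)`_(n - r)
        = c * Ag i j /\
      ((map_mx polyC A *m \adj ('X%:M + map_mx polyC (A *m A))) i j)`_(n - r)
        = c * Ag i j].
Proof.
move=> hr h1 h2 h3.
set E := A *m Ag.
have EE : E *m E = E by rewrite /E mulmxA h1.
have EA : E *m A = A by [].
have AE : A *m E = A by rewrite /E h3 mulmxA h1.
have AgE : Ag *m E = Ag by rewrite /E mulmxA h2.
have EAg : E *m Ag = Ag by rewrite /E h3 h2.
set G := A *m A + (1%:M - E).
set H := Ag *m Ag + (1%:M - E).
have GH : G *m H = 1%:M.
  have e1 : A *m A *m (Ag *m Ag) = E by rewrite -mulmxA (mulmxA A Ag) -/E EAg.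
  have e2 : A *m A *m E = A *m A by rewrite -mulmxA AE.
  have e3 : E *m (Ag *m Ag) = Ag *m Ag by rewrite mulmxA EAg.
  rewrite /G /H; mexp; rewrite e1 e2 e3 EE; mring.
have HG : H *m G = 1%:M by apply: mulmx1C.
have HA : H *m A = Ag.
  rewrite /H; mexp; rewrite EA -mulmxA -h3 AgE; mring.
have AH : A *m H = Ag.
  rewrite /H; mexp; rewrite AE mulmxA -/E EAg; mring.
have adjG : \adj G = \det G *: H.
  by rewrite -[\adj G]mulmx1 -GH mulmxA mul_adj_mx mul_scalar_mx.
have dG : \det G != 0.
  apply/eqP => h0; have := congr1 determinant GH.
  by rewrite det_mulmx h0 mul0r det1 => /eqP; rewrite eq_sym oner_eq0.
pose l (M : 'M[F]_n) : 'M[{poly F}]_n := map_mx polyC M.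
set a := l A. set e := l E. set b := l (A *m A).
have ee : e *m e = e by rewrite /a /e /b /l -map_mxM EE.
have be : b *m e = b by rewrite /a /e /b /l -map_mxM -mulmxA AE.
have eb : e *m b = b by rewrite /a /e /b /l -map_mxM mulmxA EA.
have ea : e *m a = a by rewrite /a /e /b /l -map_mxM EA.
have ae : a *m e = a by rewrite /a /e /b /l -map_mxM AE.
have lG : l G = b + (1%:M - e) by rewrite /l /G map_mxD map_mxB map_mx1.
pose V := 'X *: 1%:M + (1 - 'X) *: e.
pose V' := 'X *: 1%:M + (1 - 'X) *: (1%:M - e).
pose W := 'X *: e + l G.
have PE : 'X%:M + b = 'X *: 1%:M + b by rewrite scalemx1.
have F1 : 'X%:M + b = W *m V by rewrite PE /W /V lG; mexp; rewrite ee be; mring.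
have F2 : 'X%:M + b = V *m W by rewrite PE /W /V lG; mexp; rewrite ee eb; mring.
have F3 : V *m V' = 'X%:M by rewrite -scalemx1 /V /V'; mexp; rewrite ee; mring.
have F4 : V *m a = a by rewrite /V; mexp; rewrite ea; mring.
have F4' : a *m V = a by rewrite /V; mexp; rewrite ae; mring.
pose ev0 (M : 'M[{poly F}]_n) : 'M[F]_n := map_mx (horner_eval (0 : F)) M.
have evl (M : 'M[F]_n) : ev0 (l M) = M.
  by apply/matrixP => i j; rewrite !mxE horner_evalE hornerC.
have evW : ev0 W = G.
  rewrite /ev0 /W map_mxD.
  have -> : map_mx (horner_eval 0) ('X *: e) = 0.
    by apply/matrixP => i j; rewrite !mxE horner_evalE hornerM hornerX mul0r.
  by rewrite add0r -/(ev0 (l G)) evl.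
have ev0e (M : 'M[{poly F}]_n) i j : (M i j)`_0 = (ev0 M) i j.
  by rewrite mxE horner_evalE horner_coef0.
have rn : (r <= n)%N by rewrite -hr rank_leq_row.
have rE : \rank E = r.
  apply/eqP; rewrite eqn_leq -hr mxrankM_maxl /=.
  by rewrite -{1}EA mxrankM_maxl.
have rE' : (\rank (1%:M - E)%R <= n - r)%N.
  have : ((1%:M - E)%R <= kermx E)%MS.
    by apply/sub_kermxP; rewrite mulmxBl mul1mx EE subrr.
  by move/mxrankS; rewrite mxrank_ker rE.
have [u hu] := Dlem E (1 - 'X).
have [u' hu'] := Dlem (1%:M - E) (1 - 'X).
set v := \det V. set w := \det W.
have hv : v = 'X^(n - r) * u by rewrite /v /V scalemx1 hu rE.
have hv' : \det V' = 'X^(n - \rank (1%:M - E)%R) * u'.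
  by rewrite /V' scalemx1 -hu' map_mxB map_mx1.
have hvv : v * \det V' = 'X^n by rewrite -det_mulmx F3 det_scalar.
have Xn0 k : 'X^k != 0 :> {poly F} by rewrite expf_neq0 // polyX_eq0.
have u0 : u`_0 != 0.
  move: hv'; set k := (n - \rank (1%:M - E)%R)%N => hv'.
  have hk : (r <= k)%N by rewrite /k; lia.
  have : 'X^n * (u * ('X^(k - r) * u')) = 'X^n * 1.
    have ek : 'X^k = 'X^r * 'X^(k - r) :> {poly F} by rewrite -exprD subnKC.
    have en : 'X^n = 'X^(n - r) * 'X^r :> {poly F} by rewrite -exprD subnK.
    rewrite mulr1 -[in RHS]hvv hv hv' ek en; ring.
  move/(mulfI (Xn0 n)) => h.
  have := congr1 (fun q : {poly F} => q`_0) h; rewrite coef0M coefC /=.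
  by apply: contra_eqN => /eqP ->; rewrite mul0r eq_sym oner_eq0.
have w0 : w`_0 = \det G.
  by rewrite -horner_coef0 /w -horner_evalE -det_map_mx -/(ev0 W) evW.
have vn0 : v != 0.
  by apply/eqP => h0; move: hvv; rewrite h0 mul0r => /esym/eqP; rewrite (negbTE (Xn0 n)).
have wn0 : w != 0 by apply/eqP => h0; move: w0; rewrite h0 coef0 => /esym/eqP; rewrite (negbTE dG).
have -> : map_mx polyC (A *m A) = b by [].
have -> : map_mx polyC A = a by [].
set P := 'X%:M + b.
have hpvw : \det P = v * w by rewrite /P F2 det_mulmx.
have pn0 : \det P != 0 by rewrite hpvw mulf_neq0.
have QA : \adj P *m a = v *: (\adj W *m a).
  have K : P *m (\adj P *m a - v *: (\adj W *m a)) = 0.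
    rewrite mulmxBr mulmxA mul_mx_adj mul_scalar_mx -scalemxAr mulmxA.
    have -> : P *m \adj W = V *m (w%:M) by rewrite /P F2 -mulmxA mul_mx_adj.
    by rewrite -mulmxA mul_scalar_mx -scalemxAr F4 scalerA hpvw subrr.
  apply/eqP; rewrite -subr_eq0; apply/eqP; apply: (scal_cancel pn0).
  by rewrite -mul_scalar_mx -(mul_adj_mx P) -mulmxA K mulmx0.
have AQ : a *m \adj P = v *: (a *m \adj W).
  have K : (a *m \adj P - v *: (a *m \adj W)) *m P = 0.
    rewrite mulmxBl -mulmxA mul_adj_mx mul_mx_scalar -scalemxAl -mulmxA.
    have -> : \adj W *m P = w%:M *m V by rewrite /P F1 mulmxA mul_adj_mx.
    by rewrite mul_scalar_mx -scalemxAr F4' scalerA hpvw mulrC subrr.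
  apply/eqP; rewrite -subr_eq0; apply/eqP; apply: (scal_cancel pn0).
  by rewrite -mul_mx_scalar -(mul_mx_adj P) mulmxA K mul0mx.
have eva : ev0 a = A by rewrite evl.
exists (u`_0 * \det G); split.
- by rewrite mulf_neq0.
- by rewrite hpvw hv -mulrA coefXnM ltnn subnn coef0M w0.
move=> i j; split.
- rewrite QA mxE hv -mulrA coefXnM ltnn subnn coef0M ev0e /ev0 map_mxM.
  rewrite map_mx_adj -/(ev0 W) -/(ev0 a) evW eva adjG -scalemxAl HA mxE.
  by rewrite mulrA.
- rewrite AQ mxE hv -mulrA coefXnM ltnn subnn coef0M ev0e /ev0 map_mxM.
  rewrite map_mx_adj -/(ev0 W) -/(ev0 a) evW eva adjG -scalemxAr AH mxE.
  by rewrite mulrA.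
Qed.



Lemma pmrC (F : fieldType) n (C : 'M[F]_n) (S : {set 'I_n}) :
  pmr (map_mx polyC C) S = (pmr C S)%:P.
Proof. by rewrite /pmr -det_map_mx; congr (\det _); apply/matrixP => k l; rewrite !mxE. Qed.

Lemma coef_detP (F : fieldType) n (B : 'M[F]_n) r : (r <= n)%N ->
  (\det ('X%:M + map_mx polyC B))`_(n - r) =
  \sum_(S : {set 'I_n} | #|S| == r) pmr B S.
Proof.
move=> rn; rewrite XdiagE L1 coef_sum.
rewrite (bigID (fun S : {set 'I_n} => #|S| == r)) /= [X in _ + X]big1 ?addr0.
  apply: eq_bigr => S /eqP hS.
  have hc := cardsC S; rewrite card_ord in hc.
  rewrite prodr_const pmrC mulrC coefCM coefXn.
  have -> : (n - r == #|~: S|)%N by apply/eqP; move: hc hS; move: (#|S|) (#|~: S|) => x y; lia.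
  by rewrite mulr1.
move=> S /negP hS.
have hc := cardsC S; rewrite card_ord in hc.
rewrite prodr_const pmrC mulrC coefCM coefXn.
have -> : (n - r == #|~: S|)%N = false.
  by apply/negP => /eqP h; apply: hS; apply/eqP; move: hc h; move: (#|S|) (#|~: S|) => x y; lia.
by rewrite mulr0.
Qed.

Lemma coef_det_one (F : fieldType) n (M : 'M[F]_n) (i : 'I_n) r : (r <= n)%N ->
  (\det (diag_mx (\row_k (if k == i then 0 else 'X)) + map_mx polyC M))`_(n - r) =
  \sum_(S : {set 'I_n} | (#|S| == r) && (i \in S)) pmr M S.
Proof.
move=> rn; rewrite L1 coef_sum.
rewrite (bigID (fun S : {set 'I_n} => (#|S| == r) && (i \in S))) /=.
rewrite [X in _ + X]big1 ?addr0.
  apply: eq_bigr => S /andP [/eqP hS iS].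
  have hc := cardsC S; rewrite card_ord in hc.
  rewrite (eq_bigr (fun _ => 'X)); last first.
    move=> k; rewrite inE => kS; case: eqP => // ek.
    by rewrite ek iS in kS.
  rewrite prodr_const pmrC mulrC coefCM coefXn.
  have -> : (n - r == #|~: S|)%N by apply/eqP; move: hc hS; move: (#|S|) (#|~: S|) => x y; lia.
  by rewrite mulr1.
move=> S hS.
case iS : (i \in S); last first.
  rewrite (bigD1 i) /=; last by rewrite inE iS.
  by rewrite eqxx mul0r mul0r coef0.
rewrite iS andbT in hS.
have hc := cardsC S; rewrite card_ord in hc.
rewrite (eq_bigr (fun _ => 'X)); last first.
  move=> k; rewrite inE => kS; case: eqP => // ek.
  by rewrite ek iS in kS.
rewrite prodr_const pmrC mulrC coefCM coefXn.
have -> : (n - r == #|~: S|)%N = false.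
  by apply/negP => /eqP h; move/negP: hS; apply; apply/eqP; move: hc h; move: (#|S|) (#|~: S|) => x y; lia.
by rewrite mulr0.
Qed.

Lemma adjA_entry (F : fieldType) n (B A : 'M[F]_n) i j :
  (\adj ('X%:M + map_mx polyC B) *m map_mx polyC A) i j =
  \det (diag_mx (\row_k (if k == i then 0 else 'X)) +
        map_mx polyC (col_repl B i (col j A))).
Proof.
rewrite (expand_det_col _ i) mxE; apply: eq_bigr => k _.
rewrite mulrC; congr (_ * _).
  by rewrite !mxE eqxx /=; case: eqP => _; rewrite ?mulr0n add0r.
rewrite mxE /cofactor; congr (_ * _); congr (\det _); apply/matrixP => a b.
rewrite !mxE [lift i b == i]eq_sym (negbTE (neq_lift i b)).
by case: eqP => // ->; rewrite eq_sym (negbTE (neq_lift i b)).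
Qed.

Lemma Aadj_entry (F : fieldType) n (B A : 'M[F]_n) i j :
  (map_mx polyC A *m \adj ('X%:M + map_mx polyC B)) i j =
  \det (diag_mx (\row_k (if k == j then 0 else 'X)) +
        map_mx polyC (row_repl B j (row i A))).
Proof.
rewrite (expand_det_row _ j) mxE; apply: eq_bigr => k _.
congr (_ * _).
  by rewrite !mxE eqxx /=; case: eqP => _; rewrite ?mulr0n add0r.
rewrite mxE /cofactor; congr (_ * _); congr (\det _); apply/matrixP => a b.
by rewrite !mxE [lift j a == j]eq_sym (negbTE (neq_lift j a)).
Qed.

Lemma pm_pmr (F : fieldType) n (M : 'M[F]_n) S : principal_minor M S = pmr M S.
Proof. by []. Qed.

Unset Implicit Arguments.

Theorem corollary2p4 (R : realType) (n r : nat) (A Ag : 'M[complex R]_n)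
    (hind : is_mx_index A 1)
    (hr2 : \rank (A ^+ 2) = r) (hr : \rank A = r) (hrn : (r <= n)%N)
    (hAg : is_group_inverse A Ag) :
  forall i j : 'I_n,
    Ag i j =
      (\sum_(alpha : {set 'I_n} | (#|alpha| == r) && (j \in alpha))
          principal_minor (row_repl (A ^+ 2) j (row i A)) alpha)
      / (\sum_(alpha : {set 'I_n} | #|alpha| == r)
          principal_minor (A ^+ 2) alpha)
    /\
    Ag i j =
      (\sum_(beta : {set 'I_n} | (#|beta| == r) && (i \in beta))
          principal_minor (col_repl (A ^+ 2) i (col j A)) beta)
      / (\sum_(beta : {set 'I_n} | #|beta| == r)
          principal_minor (A ^+ 2) beta).
Proof.
move=> i j; case: hAg => h1 h2 h3.
have [c [cn0 hD hN]] := main hr h1 h2 h3.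
have eA : A ^+ 2 = A *m A by rewrite expr2 mulmxE.
rewrite eA.
under eq_bigr do rewrite pm_pmr.
under [X in _ / X]eq_bigr do rewrite pm_pmr.
rewrite -(coef_detP _ hrn) hD -(coef_det_one _ _ hrn) -Aadj_entry.
under [X in _ /\ _ = X / _]eq_bigr do rewrite pm_pmr.
rewrite -(coef_det_one _ _ hrn) -adjA_entry.
have [-> ->] := hN i j.
by split; rewrite [c * _]mulrC mulfK.
Qed.
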